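(* Let $(Q,\cdot,e)$ be a double Ward quasigroup and define $x\diamond y=(e\cdot x)\cdot(e\cdot y)$ (so $(Q,\diamond)$ is a group with identity $e$). Then $(Q,\cdot,\diamond)$ is a lateral double magma, i.e. $(x\cdot y)\diamond(z\cdot w)=(y\diamond x)\cdot(w\diamond z)$ for all $x,y,z,w\in Q$. Moreover, if $(Q,\circ)$ is a group with identity $e$ such that $(x\cdot y)\circ(z\cdot w)=(y\circ x)\cdot(w\circ z)$ for all $x,y,z,w\in Q$, then $x\circ y=x\diamond y$ for all $x,y\in Q$.
   Context: A quasigroup is a magma in which $ax=b$ and $ya=b$ have unique solutions for all $a,b$. A double Ward quasigroup $(Q,\cdot,e)$ is a quasigroup with an element $e$ such that $(ee\cdot xz)(ey\cdot z)=xy$ for all $x,y,z$. *)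

(* Defs.v *)
Definition is_quasigroup {Q : Type} (mul : Q -> Q -> Q) : Prop :=
  (forall a b : Q, exists! x : Q, mul a x = b) /\
  (forall a b : Q, exists! y : Q, mul y a = b).

Definition is_double_ward {Q : Type} (mul : Q -> Q -> Q) (e : Q) : Prop :=
  is_quasigroup mul /\
  forall x y z : Q,
    mul (mul (mul e e) (mul x z)) (mul (mul e y) z) = mul x y.

Definition is_group_with_id {Q : Type} (op : Q -> Q -> Q) (e : Q) : Prop :=
  (forall x y z : Q, op (op x y) z = op x (op y z)) /\
  (forall x : Q, op e x = x /\ op x e = x) /\
  (forall x : Q, exists y : Q, op x y = e /\ op y x = e).

Definition diamond {Q : Type} (mul : Q -> Q -> Q) (e : Q) (x y : Q) : Q :=
  mul (mul e x) (mul e y).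

Definition lateral_double_magma {Q : Type} (mul op : Q -> Q -> Q) : Prop :=
  forall x y z w : Q, op (mul x y) (mul z w) = mul (op y x) (op w z).

(* Main.v *)
Require Import Defs.

Theorem theorem4p6 (Q : Type) (mul : Q -> Q -> Q) (e : Q)
  (hW : is_double_ward mul e) :
  lateral_double_magma mul (diamond mul e) /\
  (forall circ : Q -> Q -> Q,
     is_group_with_id circ e ->
     lateral_double_magma mul circ ->
     forall x y : Q, circ x y = diamond mul e x y).
Proof.
  destruct hW as [[HL HR] W].
  assert (lc : forall a x y, mul a x = mul a y -> x = y).
  { intros a x y H. destruct (HL a (mul a x)) as [u [_ Hu]].
    rewrite <- (Hu x eq_refl). apply Hu. symmetry; exact H. }
  assert (rc : forall a x y, mul x a = mul y a -> x = y).
  { intros a x y H. destruct (HR a (mul x a)) as [u [_ Hu]].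
    rewrite <- (Hu x eq_refl). apply Hu. symmetry; exact H. }
  assert (lsol : forall a b, exists x, mul a x = b).
  { intros a b. destruct (HL a b) as [u [Hu _]]. eauto. }
  assert (rsol : forall a b, exists x, mul x a = b).
  { intros a b. destruct (HR a b) as [u [Hu _]]. eauto. }
  assert (A0 : forall u y, mul (mul (mul e e) u) u = mul (mul e y) y).
  { intros u y. destruct (lsol (mul e y) u) as [z Hz].
    rewrite <- Hz. apply W. }
  assert (Hee : mul e e = e).
  { apply (rc e). apply (rc e). rewrite (A0 e e). reflexivity. }
  assert (A : forall y, mul (mul e y) y = e).
  { intro y. rewrite <- (A0 e y). rewrite Hee, Hee. exact Hee. }
  rewrite Hee in W.
  assert (B : forall x y, mul (mul e (mul x y)) e = mul x y).
  { intros x y. pose proof (W x y y) as H. rewrite A in H. exact H. }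
  assert (B' : forall u, mul (mul e u) e = u).
  { intro u. destruct (lsol e u) as [x Hx]. rewrite <- Hx. apply B. }
  assert (Ge : forall x, mul e (mul x e) = x).
  { intro x. apply (rc e). apply B'. }
  assert (C : forall x, mul x (mul x e) = e).
  { intro x. pose proof (W x (mul x e) e) as H. rewrite B', A in H.
    symmetry; exact H. }
  assert (D : forall x y, mul (mul e y) (mul x e) = mul (mul x y) e).
  { intros x y. pose proof (W x y (mul x e)) as H. rewrite C, Hee in H.
    rewrite <- H. symmetry. apply B'. }
  assert (Ee : forall x, mul (mul x e) e = x).
  { intro x. pose proof (D x e) as H. rewrite Hee in H.
    rewrite Ge in H. symmetry. exact H. }
  assert (G : forall x, mul e x = mul x e).
  { intro x. apply (rc e). rewrite B'. symmetry. apply Ee. }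
  assert (GG : forall x, mul e (mul e x) = x).
  { intro x. rewrite (G x), G. apply Ee. }
  assert (M : forall x y, mul (mul e y) (mul e x) = mul e (mul x y)).
  { intros x y. rewrite (G x), (G (mul x y)). apply D. }
  split.
  - intros x y z w. unfold diamond. rewrite !M. reflexivity.
  - intros circ [_ [Hid _]] Hlat x y. unfold diamond.
    pose proof (Hlat (mul e x) e (mul e y) e) as H.
    rewrite (proj1 (Hid (mul e x))), (proj1 (Hid (mul e y))) in H.
    rewrite <- !G, !GG in H. exact H.
Qed.
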